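(* Let $n\ge 1$ and $k\ge 2$ be integers and let ${\boldsymbol A}\in\mathbb{R}^{n\times n}$ be a symmetric matrix. Let ${\boldsymbol\sigma}=({\boldsymbol\sigma}_1,\dots,{\boldsymbol\sigma}_n)$ be a local maximum of $F_{\boldsymbol A}({\boldsymbol\sigma})=\sum_{i,j=1}^n A_{ij}\langle{\boldsymbol\sigma}_i,{\boldsymbol\sigma}_j\rangle$ over the manifold ${\sf S}(n,k)=\{({\boldsymbol\sigma}_1,\dots,{\boldsymbol\sigma}_n): {\boldsymbol\sigma}_i\in\mathbb{R}^k,\ \|{\boldsymbol\sigma}_i\|_2=1\ \forall i\}$. Then $$ {\sf SDP}({\boldsymbol A})\ \ge\ F_{\boldsymbol A}({\boldsymbol\sigma})\ \ge\ {\sf SDP}({\boldsymbol A})-\frac{8}{\sqrt{k}}\, n\,\|{\boldsymbol A}\|_2, $$ where ${\sf SDP}({\boldsymbol A})=\max\{\langle {\boldsymbol A},{\boldsymbol X}\rangle : {\boldsymbol X}\in\mathbb{R}^{n\times n},\ {\boldsymbol X}\succeq 0,\ X_{ii}=1\ \forall i\in[n]\}$.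
   Context: $\langle{\boldsymbol A},{\boldsymbol B}\rangle={\rm Tr}({\boldsymbol A}^{\sf T}{\boldsymbol B})$ is the matrix scalar product; $\|{\boldsymbol A}\|_2$ is the $\ell_2$ operator norm of ${\boldsymbol A}$. ${\sf S}(n,k)$ is identified with the set of $n\times k$ real matrices whose rows are unit vectors (a product of $n$ copies of the sphere ${\sf S}^{k-1}$), and ''local maximum'' refers to this manifold structure. *)

(* Defs.v *)
From HB Require Import structures.
From mathcomp Require Import all_boot all_order all_algebra.
From mathcomp Require Import classical_sets reals.
Set Implicit Arguments. Unset Strict Implicit. Unset Printing Implicit Defensive.
Import Order.TTheory GRing.Theory Num.Theory.
Local Open Scope ring_scope.
Local Open Scope classical_set_scope.

Section Defs.
Variable R : realType.

Definition mxdot (m p : nat) (A B : 'M[R]_(m, p)) : R := \tr (A^T *m B).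

Definition vnorm (n : nat) (v : 'cV[R]_n) : R := Num.sqrt (\sum_i v i 0 ^+ 2).

Definition opnorm2 (n : nat) (A : 'M[R]_n) : R :=
  sup [set r | exists v : 'cV[R]_n, vnorm v = 1 /\ r = vnorm (A *m v)].

Definition psd (n : nat) (X : 'M[R]_n) : Prop :=
  X^T = X /\ forall v : 'cV[R]_n, 0 <= (v^T *m X *m v) 0 0.

Definition SDP (n : nat) (A : 'M[R]_n) : R :=
  sup [set r | exists X : 'M[R]_n,
        psd X /\ (forall i, X i i = 1) /\ r = mxdot A X].

Definition onSnk (n k : nat) (s : 'M[R]_(n, k)) : Prop :=
  forall i, \sum_l s i l ^+ 2 = 1.

Definition FA (n k : nat) (A : 'M[R]_n) (s : 'M[R]_(n, k)) : R :=
  \sum_i \sum_j A i j * (\sum_l s i l * s j l).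

(* local maximum of F_A on S(n,k) w.r.t. the subspace topology of R^{n x k}
   (entrywise sup-distance neighbourhoods) *)
Definition local_max_Snk (n k : nat) (A : 'M[R]_n) (s : 'M[R]_(n, k)) : Prop :=
  onSnk s /\
  exists eps : R, 0 < eps /\
    forall t : 'M[R]_(n, k), onSnk t ->
      (forall i l, `|t i l - s i l| < eps) -> FA A t <= FA A s.
End Defs.

(* Main.v *)
Require Import Defs.
From HB Require Import structures.
From mathcomp Require Import all_boot all_order all_algebra.
From mathcomp Require Import classical_sets reals.
From mathcomp Require Import ring lra.
Import Order.TTheory GRing.Theory Num.Theory.
Local Open Scope ring_scope.

Definition bil {R : realType} {n : nat} (X : 'M[R]_n) (v w : 'I_n -> R) :=
  \sum_a \sum_b v a * X a b * w b.
Definition qf {R : realType} {n : nat} (X : 'M[R]_n) (v : 'I_n -> R) := bil X v v.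

Lemma sum_delta_r {R : realType} {n : nat} (f : 'I_n -> R) i :
  \sum_b f b * (b == i)%:R = f i.
Proof.
rewrite (bigD1 i) //= eqxx mulr1 big1 ?addr0 // => b /negbTE ->; by rewrite mulr0.
Qed.

Lemma sum_delta_l {R : realType} {n : nat} (f : 'I_n -> R) i :
  \sum_b (b == i)%:R * f b = f i.
Proof. rewrite -[RHS](sum_delta_r f i); apply: eq_bigr => b _; by rewrite mulrC. Qed.

Lemma psd_qf {R : realType} {n : nat} (X : 'M[R]_n) v : psd X -> 0 <= qf X v.
Proof.
move=> [_ /(_ (\col_i v i))]; congr (_ <= _).
rewrite !mxE /qf /bil exchange_big; apply: eq_bigr => b _.
rewrite !mxE big_distrl /=; apply: eq_bigr => a _; by rewrite !mxE.
Qed.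

Lemma bilC {R : realType} {n : nat} (X : 'M[R]_n) v w : X^T = X -> bil X v w = bil X w v.
Proof.
move=> sX; rewrite /bil exchange_big; apply: eq_bigr => a _; apply: eq_bigr => b _.
have -> : X b a = X a b by rewrite -{1}sX mxE.
ring.
Qed.

Lemma qf_shift {R : realType} {n : nat} (X : 'M[R]_n) v w t : X^T = X ->
  qf X (fun a => v a + t * w a) = qf X v + 2 * t * bil X v w + t ^+ 2 * qf X w.
Proof.
move=> sX.
have e : qf X (fun a => v a + t * w a) =
  qf X v + t * bil X v w + t * bil X w v + t ^+ 2 * qf X w.
  rewrite /qf /bil !mulr_sumr -!big_split; apply: eq_bigr => a _.
  rewrite !mulr_sumr -!big_split; apply: eq_bigr => b _ /=; ring.
by rewrite e (@bilC _ _ X w v sX); ring.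
Qed.

Lemma bil_delta {R : realType} {n : nat} (X : 'M[R]_n) v i :
  bil X v (fun b => (b == i)%:R) = \sum_a v a * X a i.
Proof. rewrite /bil; apply: eq_bigr => a _; exact: sum_delta_r. Qed.

Lemma qf_delta {R : realType} {n : nat} (X : 'M[R]_n) i :
  qf X (fun b => (b == i)%:R) = X i i.
Proof.
rewrite /qf bil_delta; exact: (sum_delta_l (fun a => X a i)).
Qed.

Lemma psd_diag {R : realType} {n : nat} (X : 'M[R]_n) i : psd X -> 0 <= X i i.
Proof. by move=> p; rewrite -qf_delta; apply: psd_qf. Qed.

Lemma psd_diag0 {R : realType} {n : nat} (X : 'M[R]_n) i j : psd X ->
  X j j = 0 -> X i j = 0.
Proof.
move=> p Xjj; have sX := p.1.
have H t : 0 <= X i i + 2 * t * X i j.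
  have := @psd_qf _ _ X (fun a => (a == i)%:R + t * (a == j)%:R) p.
  rewrite qf_shift // !qf_delta bil_delta Xjj mulr0 addr0.
  by rewrite (sum_delta_l (fun a => X a j)).
apply/eqP; apply/negPn/negP => nz.
have := H (- (1 + X i i) / (2 * X i j)).
have -> : X i i + 2 * (- (1 + X i i) / (2 * X i j)) * X i j = -1.
  by field; rewrite nz /=; lra.
lra.
Qed.

Lemma qf_mx {R : realType} {n : nat} (X : 'M[R]_n) (v : 'cV[R]_n) :
  (v^T *m X *m v) 0 0 = qf X (fun i => v i 0).
Proof.
rewrite !mxE /qf /bil exchange_big; apply: eq_bigr => b _.
rewrite !mxE big_distrl /=; apply: eq_bigr => a _; by rewrite !mxE.
Qed.

Lemma psd_fact {R : realType} {n : nat} (X : 'M[R]_n) : psd X ->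
  exists m (Y : 'M[R]_(n, m)), forall i j, X i j = \sum_b Y i b * Y j b.
Proof.
move: {-1}#|[pred a | X a a != 0]| (leqnn #|[pred a | X a a != 0]|) => N.
elim: N X => [|N IH] X hN p; last first.
  case: (boolP [exists a, X a a != 0]) => [/existsP [i ni]|].
  - have sX := p.1.
    have sym a b : X b a = X a b by rewrite -{1}sX mxE.
    set c := X i i.
    have c0 : 0 < c by rewrite lt_def ni psd_diag.
    pose X' := \matrix_(a, b) (X a b - X a i * X b i / c).
    have pX' : psd X'.
      split.
        apply/matrixP => a b; rewrite !mxE sym; ring.
      move=> v; rewrite qf_mx.
      set B := \sum_a v a 0 * X a i.
      have e : qf X' (fun i => v i 0) = qf X (fun i => v i 0) - B ^+ 2 / c.
        rewrite /qf /bil expr2 /B big_distrl big_distrl -sumrB /=.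
        apply: eq_bigr => a _; rewrite mulr_sumr /= big_distrl /= -sumrB.
        apply: eq_bigr => b _; rewrite !mxE sym; ring.
      rewrite e.
      have := @psd_qf _ _ X (fun a => v a 0 + (- B / c) * (a == i)%:R) p.
      rewrite qf_shift // qf_delta bil_delta -/B -/c.
      have -> : qf X (fun i0 : 'I_n => v i0 0) + 2 * (- B / c) * B + (- B / c) ^+ 2 * c
          = qf X (fun i0 : 'I_n => v i0 0) - B ^+ 2 / c.
        by field; rewrite gt_eqF.
      done.
    have hN' : (#|[pred a | X' a a != 0%R]| <= N)%N.
      have sub : [pred a | X' a a != 0] \subset [predD1 [pred a | X a a != 0] & i].
        apply/fintype.subsetP => a; rewrite !inE !mxE => h; apply/andP; split.
          apply/eqP => ai; move: h; rewrite ai -/c.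
          have -> : c - c * c / c = 0 by field; rewrite gt_eqF.
          by rewrite eqxx.
        apply/eqP => aa; move: h.
        have -> : X a i = 0 by rewrite -sym; apply: psd_diag0.
        by rewrite aa mul0r mul0r subrr eqxx.
      have h2 := subset_leq_card sub.
      have h1 : #|[pred a | X a a != 0%R]| = (1 + #|[predD1 [pred a | X a a != 0%R] & i]|)%N.
        by rewrite {1}(cardD1 i) inE ni.
      rewrite h1 add1n ltnS in hN.
      exact: leq_trans h2 hN.
    have [m [Y' hY']] := IH X' hN' pX'.
    exists (1 + m)%N, (row_mx (\col_a (X a i / Num.sqrt c)) Y').
    move=> a b; rewrite big_split_ord /= big_ord1 !row_mxEl !mxE.
    have -> : \sum_(i0 < m) row_mx (\col_a (X a i / Num.sqrt c)) Y' a (rshift 1 i0) *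
      row_mx (\col_a (X a i / Num.sqrt c)) Y' b (rshift 1 i0) = X' a b.
      by rewrite hY'; apply: eq_bigr => j _; rewrite !row_mxEr.
    rewrite mxE.
    have sc : Num.sqrt c ^+ 2 = c by rewrite sqr_sqrtr // ltW.
    have sc0 : Num.sqrt c != 0 by rewrite gt_eqF // sqrtr_gt0.
    rewrite mulrACA -invfM -expr2 sc; ring.
  move=> hn; exists 0%N, 0 => i j; rewrite big_ord0.
  apply: psd_diag0 => //; apply/eqP; apply/negPn; apply: contra hn => h.
  by apply/existsP; exists j.
exists 0%N, 0 => i j; rewrite big_ord0.
apply: psd_diag0 => //; apply/eqP; apply/negPn/negP => h.
move: hN; rewrite leqn0 => /eqP/card0_eq/(_ j); by rewrite inE h.
Qed.

Local Open Scope classical_set_scope.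

Lemma CS {R : realType} {I : finType} (a b : I -> R) :
  (\sum_i a i * b i) ^+ 2 <= (\sum_i a i ^+ 2) * (\sum_i b i ^+ 2).
Proof.
have H : 0 <= \sum_i \sum_j (a i * b j - a j * b i) ^+ 2.
  by apply: sumr_ge0 => i _; apply: sumr_ge0 => j _; apply: sqr_ge0.
have E : \sum_i \sum_j (a i * b j - a j * b i) ^+ 2 =
   2 * ((\sum_i a i ^+ 2) * (\sum_i b i ^+ 2)) - 2 * (\sum_i a i * b i) ^+ 2.
  have e1 : \sum_i \sum_j (a i * b j - a j * b i) ^+ 2 =
     \sum_i \sum_j (a i ^+ 2 * b j ^+ 2) + \sum_i \sum_j (a j ^+ 2 * b i ^+ 2)
     - 2 * \sum_i \sum_j (a i * b i * (a j * b j)).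
    rewrite mulr_sumr -big_split -sumrB /=; apply: eq_bigr => i _.
    rewrite mulr_sumr -big_split -sumrB /=; apply: eq_bigr => j _; ring.
  rewrite e1.
  have e2 : \sum_i \sum_j (a i ^+ 2 * b j ^+ 2) = (\sum_i a i ^+ 2) * (\sum_i b i ^+ 2).
    by rewrite big_distrl; apply: eq_bigr => i _; rewrite big_distrr.
  have e3 : \sum_i \sum_j (a i * b i * (a j * b j)) = (\sum_i a i * b i) ^+ 2.
    by rewrite expr2 big_distrl; apply: eq_bigr => i _; rewrite big_distrr.
  rewrite e2 e3.
  have e4 : \sum_i \sum_j (a j ^+ 2 * b i ^+ 2) = (\sum_i a i ^+ 2) * (\sum_i b i ^+ 2).
    by rewrite exchange_big big_distrl; apply: eq_bigr => i _; rewrite big_distrr.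
  rewrite e4; ring.
rewrite E in H; lra.
Qed.

Lemma sq_le_sum {R : realType} {I : finType} (a : I -> R) j :
  a j ^+ 2 <= \sum_i a i ^+ 2.
Proof.
rewrite (bigD1 j) //= lerDl; apply: sumr_ge0 => i _; apply: sqr_ge0.
Qed.

Lemma vnorm1 {R : realType} {n : nat} (v : 'cV[R]_n) :
  vnorm v = 1 -> \sum_i v i 0 ^+ 2 = 1.
Proof.
rewrite /vnorm => h.
have p : 0 <= \sum_i v i 0 ^+ 2 by apply: sumr_ge0 => i _; apply: sqr_ge0.
by rewrite -(sqr_sqrtr p) h expr1n.
Qed.

Lemma opnorm_ub {R : realType} {n : nat} (A : 'M[R]_n) :
  has_ubound [set r | exists v : 'cV[R]_n, vnorm v = 1 /\ r = vnorm (A *m v)].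
Proof.
exists (Num.sqrt (\sum_i (\sum_j `|A i j|) ^+ 2)) => r [v [v1 ->]].
rewrite /vnorm; apply: ler_wsqrtr; apply: ler_sum => i _.
have vj j : `|v j 0| <= 1.
  have := sq_le_sum (fun j => v j 0) j; rewrite vnorm1 // => h.
  have := normr_ge0 (v j 0); rewrite -real_normK ?num_real // in h; nra.
rewrite mxE -real_normK ?num_real //.
have hle : `|\sum_j A i j * v j 0| <= \sum_j `|A i j|.
  apply: le_trans (ler_norm_sum _ _ _) _; apply: ler_sum => j _.
  rewrite normrM; have := normr_ge0 (A i j); have := vj j; nra.
have := normr_ge0 (\sum_j A i j * v j 0); nra.
Qed.

Lemma opnorm_ge {R : realType} {n : nat} (A : 'M[R]_n) (v : 'cV[R]_n) :
  vnorm v = 1 -> vnorm (A *m v) <= opnorm2 A.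
Proof.
move=> h; apply: ub_le_sup; first exact: opnorm_ub.
by exists v.
Qed.

Lemma opnorm_ge0 {R : realType} {n : nat} (A : 'M[R]_n) : (1 <= n)%N -> 0 <= opnorm2 A.
Proof.
case: n A => // n A _.
pose v : 'cV[R]_n.+1 := \col_i (i == ord0)%:R.
have v1 : vnorm v = 1.
  rewrite /vnorm (bigD1 ord0) //= big1 ?addr0 ?mxE ?eqxx ?expr1n ?sqrtr1 //.
  by move=> i /negbTE; rewrite mxE => ->; rewrite expr0n.
apply: le_trans _ (@opnorm_ge _ _ A v v1); rewrite /vnorm; exact: sqrtr_ge0.
Qed.

Lemma qf_bound {R : realType} {n : nat} (A : 'M[R]_n) (z : 'I_n -> R) :
  `|qf A z| <= opnorm2 A * \sum_i z i ^+ 2.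
Proof.
set s2 := \sum_i z i ^+ 2.
have s2p : 0 <= s2 by apply: sumr_ge0 => i _; apply: sqr_ge0.
have [s0|s0] := eqVneq s2 0.
  have zi i : z i = 0.
    have := sq_le_sum z i; rewrite -/s2 s0 => h; apply/eqP; rewrite -sqrf_eq0.
    by rewrite eq_le h sqr_ge0.
  rewrite s0 mulr0 /qf /bil big1 ?normr0 // => a _; by rewrite big1 // => b _; rewrite !zi; ring.
have s2p' : 0 < s2 by rewrite lt_def s0 s2p.
set r := Num.sqrt s2.
have r0 : 0 < r by rewrite sqrtr_gt0.
have rr : r ^+ 2 = s2 by rewrite sqr_sqrtr.
pose v : 'cV[R]_n := \col_i (z i / r).
have v1 : vnorm v = 1.
  rewrite /vnorm.
  have -> : \sum_i v i 0 ^+ 2 = s2 / r ^+ 2.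
    rewrite /s2 big_distrl; apply: eq_bigr => i _; rewrite mxE expr_div_n //.
  by rewrite rr divff // sqrtr1.
have hw := @opnorm_ge _ _ A v v1.
pose w i := (A *m v) i 0.
have cs := CS (fun i => v i 0) w.
rewrite vnorm1 // mul1r in cs.
have wn : 0 <= vnorm (A *m v) by exact: sqrtr_ge0.
have wq : \sum_i w i ^+ 2 = vnorm (A *m v) ^+ 2 by rewrite sqr_sqrtr //; apply: sumr_ge0 => i _; apply: sqr_ge0.
rewrite wq in cs.
have e : qf A z = r ^+ 2 * \sum_i v i 0 * w i.
  rewrite /qf /bil mulr_sumr; apply: eq_bigr => a _.
  rewrite /w !mxE big_distrr mulr_sumr; apply: eq_bigr => b _; rewrite !mxE.
  change (z a * A a b * z b = r ^+ 2 * ((z a / r) * (A a b * (z b / r)))); field; by rewrite gt_eqF.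
rewrite e normrM ger0_norm ?sqr_ge0 // rr mulrC ler_pM2r //.
set x := \sum_i v i 0 * w i in cs *.
have : `|x| <= vnorm (A *m v).
  rewrite -real_normK ?num_real // in cs.
  have := normr_ge0 x; nra.
move=> h; exact: le_trans h hw.
Qed.

Local Close Scope classical_set_scope.

Definition dotr {R : realType} {n k : nat} (s u : 'M[R]_(n, k)) i j :=
  \sum_l s i l * u j l.

Definition curve {R : realType} {n k : nat} (s u : 'M[R]_(n, k)) (t : R) : 'M[R]_(n, k) :=
  \matrix_(i, l) (((1 - t ^+ 2 * dotr u u i i) * s i l + 2 * t * u i l)
                   / (1 + t ^+ 2 * dotr u u i i)).

Lemma dotr_ge0 {R : realType} {n k : nat} (u : 'M[R]_(n, k)) i : 0 <= dotr u u i i.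
Proof. by apply: sumr_ge0 => l _; rewrite -expr2 sqr_ge0. Qed.

Lemma den_gt0 {R : realType} {n k : nat} (u : 'M[R]_(n, k)) i t :
  0 < 1 + t ^+ 2 * dotr u u i i.
Proof.
have := dotr_ge0 u i; have := sqr_ge0 t; move=> h1 h2.
have : 0 <= t ^+ 2 * dotr u u i i by apply: mulr_ge0.
lra.
Qed.

Lemma curve_dot {R : realType} {n k : nat} (s u : 'M[R]_(n, k)) t i j :
  dotr (curve s u t) (curve s u t) i j =
  ((1 - t ^+ 2 * dotr u u i i) * (1 - t ^+ 2 * dotr u u j j) * dotr s s i j
   + 2 * t * (1 - t ^+ 2 * dotr u u i i) * dotr s u i j
   + 2 * t * (1 - t ^+ 2 * dotr u u j j) * dotr u s i j
   + 4 * t ^+ 2 * dotr u u i j)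
  / ((1 + t ^+ 2 * dotr u u i i) * (1 + t ^+ 2 * dotr u u j j)).
Proof.
have di := den_gt0 u i t; have dj := den_gt0 u j t.
rewrite {1}/dotr; under eq_bigr => l _ do rewrite !mxE.
move: di dj; move: (dotr u u i i) (dotr u u j j) => ai aj di dj.
rewrite /dotr !big_distrr /= -!big_split /= big_distrl /=.
apply: eq_bigr => l _.
by field; rewrite !gt_eqF.
Qed.

Lemma curve_sym {R : realType} {n k : nat} (s u : 'M[R]_(n, k)) t i j :
  dotr (curve s u t) (curve s u t) i j + dotr (curve s u (- t)) (curve s u (- t)) i j
  - 2 * dotr s s i j =
  4 * t ^+ 2 * ((2 * dotr u u i j - (dotr u u i i + dotr u u j j) * dotr s s i j)
  / ((1 + t ^+ 2 * dotr u u i i) * (1 + t ^+ 2 * dotr u u j j))).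
Proof.
have di := den_gt0 u i t; have dj := den_gt0 u j t.
rewrite !curve_dot sqrrN.
set ai := dotr u u i i; set aj := dotr u u j j.
by field; rewrite !gt_eqF.
Qed.

Lemma curve_on {R : realType} {n k : nat} (s u : 'M[R]_(n, k)) t :
  onSnk s -> (forall i, dotr s u i i = 0) -> onSnk (curve s u t).
Proof.
move=> os tg i.
have e0 : dotr (curve s u t) (curve s u t) i i = \sum_l curve s u t i l ^+ 2.
  by apply: eq_bigr => l _; rewrite expr2.
have e1 : dotr s s i i = 1 by rewrite -(os i); apply: eq_bigr => l _; rewrite expr2.
have e2 : dotr u s i i = 0 by rewrite -(tg i); apply: eq_bigr => l _; rewrite mulrC.
rewrite -e0 curve_dot e1 e2 (tg i).
have di := den_gt0 u i t.
move: di; move: (dotr u u i i) => a di.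
by field; rewrite gt_eqF.
Qed.

Lemma FA_curve {R : realType} {n k : nat} (A : 'M[R]_n) (s u : 'M[R]_(n, k)) t :
  FA A (curve s u t) + FA A (curve s u (- t)) - 2 * FA A s =
  4 * t ^+ 2 * \sum_i \sum_j A i j *
   ((2 * dotr u u i j - (dotr u u i i + dotr u u j j) * dotr s s i j)
  / ((1 + t ^+ 2 * dotr u u i i) * (1 + t ^+ 2 * dotr u u j j))).
Proof.
rewrite /FA mulr_sumr -big_split /= mulr_sumr -sumrB; apply: eq_bigr => i _.
rewrite mulr_sumr -big_split /= mulr_sumr -sumrB; apply: eq_bigr => j _.
transitivity (A i j * (dotr (curve s u t) (curve s u t) i j
   + dotr (curve s u (- t)) (curve s u (- t)) i j - 2 * dotr s s i j)).
  rewrite /dotr; ring.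
rewrite curve_sym; ring.
Qed.

Lemma curve_close {R : realType} {n k : nat} (s u : 'M[R]_(n, k)) t i l :
  onSnk s -> `|t| <= 1 ->
  `|curve s u t i l - s i l| <= 2 * `|t| * (dotr u u i i + `|u i l|).
Proof.
move=> os t1.
have di := den_gt0 u i t.
have a0 := dotr_ge0 u i.
have sl : `|s i l| <= 1.
  have := sq_le_sum (fun l => s i l) l; rewrite /= (os i) => h.
  have := normr_ge0 (s i l); rewrite -real_normK ?num_real // in h; nra.
rewrite mxE.
move: di a0; move: (dotr u u i i) => a di a0.
have e : ((1 - t ^+ 2 * a) * s i l + 2 * t * u i l) / (1 + t ^+ 2 * a) - s i l
   = (- (2 * t ^+ 2 * a * s i l) + 2 * t * u i l) / (1 + t ^+ 2 * a).
  by field; rewrite gt_eqF.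
rewrite e normrM normfV (gtr0_norm di).
have hx : `|- (2 * t ^+ 2 * a * s i l) + 2 * t * u i l| <=
   2 * t ^+ 2 * a * `|s i l| + 2 * `|t| * `|u i l|.
  apply: le_trans (ler_normD _ _) _.
  rewrite normrN !normrM (ger0_norm a0) (ger0_norm (ler0n _ 2)) -expr2 real_normK ?num_real //.
have t2 : t ^+ 2 <= `|t| by rewrite -real_normK ?num_real //; have := normr_ge0 t; nra.
have hb : 2 * t ^+ 2 * a * `|s i l| + 2 * `|t| * `|u i l| <= 2 * `|t| * (a + `|u i l|).
  have ta : 0 <= t ^+ 2 * a by apply: mulr_ge0 => //; apply: sqr_ge0.
  have := normr_ge0 (s i l); have := normr_ge0 t; nra.
have hd : `|- (2 * t ^+ 2 * a * s i l) + 2 * t * u i l| / (1 + t ^+ 2 * a)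
   <= `|- (2 * t ^+ 2 * a * s i l) + 2 * t * u i l|.
  rewrite ler_pdivrMr // ler_peMr //; have : 0 <= t ^+ 2 * a by apply: mulr_ge0 => //; apply: sqr_ge0.
  lra.
exact: le_trans hd (le_trans hx hb).
Qed.

Lemma term_le_sum {R : realType} {I : finType} (f : I -> R) j :
  (forall i, 0 <= f i) -> f j <= \sum_i f i.
Proof. move=> h; rewrite (bigD1 j) //= lerDl; exact: sumr_ge0. Qed.

Lemma div_lb {R : realType} (B x : R) : 1 <= x -> B - `|B| * (x - 1) <= B / x.
Proof.
move=> x1; have x0 : 0 < x by lra.
rewrite ler_pdivlMr //.
have h1 := ler_norm B; have h2 := normr_ge0 B.
have h3 : 0 <= (x - 1) * (`|B| * x - B) by apply: mulr_ge0; nra.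
nra.
Qed.

Lemma small_t {R : realType} (c b : R) : 0 <= c -> 0 < b ->
  0 < b / (c + 1) /\ b / (c + 1) * c < b.
Proof.
move=> c0 b0; have c1 : 0 < c + 1 by lra.
split; first by apply: divr_gt0.
rewrite mulrAC ltr_pdivrMr //; nra.
Qed.

Lemma second_order {R : realType} {n k : nat} (A : 'M[R]_n) (s u : 'M[R]_(n, k)) :
  A^T = A -> local_max_Snk A s -> (forall i, dotr s u i i = 0) ->
  \sum_i \sum_j A i j * dotr u u i j <=
  \sum_i (\sum_j A i j * dotr s s i j) * dotr u u i i.
Proof.
move=> sA [os [eps [eps0 hloc]]] tg.
have symA i j : A j i = A i j by rewrite -{1}sA mxE.
have symM i j : dotr s s j i = dotr s s i j.
  by apply: eq_bigr => l _; rewrite mulrC.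
pose B i j := A i j * (2 * dotr u u i j - (dotr u u i i + dotr u u j j) * dotr s s i j).
pose Q := \sum_i \sum_j B i j.
have eQ : Q = 2 * (\sum_i \sum_j A i j * dotr u u i j -
  \sum_i (\sum_j A i j * dotr s s i j) * dotr u u i i).
  have e3 : \sum_i \sum_j A i j * dotr u u j j * dotr s s i j =
            \sum_i (\sum_j A i j * dotr s s i j) * dotr u u i i.
    rewrite exchange_big /=; apply: eq_bigr => i _; rewrite big_distrl /=.
    by apply: eq_bigr => j _; rewrite symA symM; ring.
  have e2 : \sum_i \sum_j A i j * dotr u u i i * dotr s s i j =
            \sum_i (\sum_j A i j * dotr s s i j) * dotr u u i i.
    apply: eq_bigr => i _; rewrite big_distrl /=.
    by apply: eq_bigr => j _; ring.
  transitivity (2 * (\sum_i \sum_j A i j * dotr u u i j)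
     - \sum_i \sum_j A i j * dotr u u i i * dotr s s i j
     - \sum_i \sum_j A i j * dotr u u j j * dotr s s i j); last by rewrite e2 e3; ring.
  rewrite /Q /B mulr_sumr -!sumrB; apply: eq_bigr => i _.
  rewrite mulr_sumr -!sumrB; apply: eq_bigr => j _; ring.
suff : Q <= 0 by rewrite eQ; lra.
rewrite leNgt; apply/negP => Qpos.
pose al := \sum_i dotr u u i i.
pose be := \sum_i \sum_l `|u i l|.
pose S := \sum_i \sum_j `|B i j|.
have al0 : 0 <= al by apply: sumr_ge0 => i _; apply: dotr_ge0.
have be0 : 0 <= be by apply: sumr_ge0 => i _; apply: sumr_ge0 => l _.
have S0 : 0 <= S by apply: sumr_ge0 => i _; apply: sumr_ge0 => l _.
have ai i : dotr u u i i <= al by apply: (term_le_sum (fun i => dotr u u i i)) => j; apply: dotr_ge0.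
have ui i l : `|u i l| <= be.
  apply: le_trans (term_le_sum (fun i => \sum_l `|u i l|) i _).
    exact: (term_le_sum (fun l => `|u i l|)).
  by move=> j; apply: sumr_ge0.
have [t1p t1b] := @small_t R al 1 al0 ltr01.
have [t2p t2b] : 0 < eps / (2 * (al + be) + 1) /\ eps / (2 * (al + be) + 1) * (2 * (al + be)) < eps.
  by apply: small_t => //; lra.
have [t3p t3b] : 0 < Q / (3 * al * S + 1) /\ Q / (3 * al * S + 1) * (3 * al * S) < Q.
  by apply: small_t => //; apply: mulr_ge0 => //; lra.
set t1 := 1 / (al + 1) in t1p t1b.
set t2 := eps / (2 * (al + be) + 1) in t2p t2b.
set t3 := Q / (3 * al * S + 1) in t3p t3b.
pose t := Order.min t1 (Order.min t2 t3).
have tt1 : t <= t1 by rewrite /t ge_min lexx.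
have tt2 : t <= t2 by rewrite /t ge_min; apply/orP; right; rewrite ge_min lexx.
have tt3 : t <= t3 by rewrite /t ge_min; apply/orP; right; rewrite ge_min lexx orbT.
have tp : 0 < t by rewrite /t !lt_min t1p t2p t3p.
have t1le : t1 <= 1 by rewrite /t1 ler_pdivrMr; lra.
have tle1 : t <= 1 by lra.
have tal : t * al <= 1.
  have : t * al <= t1 * al by apply: ler_wpM2r.
  lra.
have teps : t * (2 * (al + be)) < eps.
  have : t * (2 * (al + be)) <= t2 * (2 * (al + be)) by apply: ler_wpM2r => //; lra.
  lra.
have tQ : t * (3 * al * S) < Q.
  have : t * (3 * al * S) <= t3 * (3 * al * S).
    by apply: ler_wpM2r => //; apply: mulr_ge0 => //; lra.
  lra.
have close (tt : R) : `|tt| = t -> forall i l, `|curve s u tt i l - s i l| < eps.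
  move=> htt i l; apply: le_lt_trans (curve_close s u tt i l os _) _; rewrite htt //.
  have : dotr u u i i + `|u i l| <= al + be by apply: lerD.
  move=> h; have : 2 * t * (dotr u u i i + `|u i l|) <= 2 * t * (al + be).
    by apply: ler_wpM2l => //; lra.
  lra.
have F1 : FA A (curve s u t) <= FA A s.
  apply: hloc; first exact: curve_on.
  by apply: close; rewrite gtr0_norm.
have F2 : FA A (curve s u (- t)) <= FA A s.
  apply: hloc; first exact: curve_on.
  by apply: close; rewrite normrN gtr0_norm.
have := FA_curve A s u t.
set H := \sum_i \sum_j _.
move=> eH.
have t4p : 0 < 4 * t ^+ 2 by apply: mulr_gt0 => //; apply: exprn_gt0.
have H0 : H <= 0.
  have : 4 * t ^+ 2 * H <= 0 by rewrite -eH; lra.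
  by rewrite pmulr_rle0.
have HQ : Q - t * (3 * al * S) <= H.
  have -> : Q - t * (3 * al * S) = \sum_i \sum_j (B i j - `|B i j| * (3 * (t * al))).
    have -> : t * (3 * al * S) = 3 * (t * al) * S by ring.
    move: (3 * (t * al)) => c.
    rewrite /Q /S mulr_sumr -sumrB; apply: eq_bigr => i _.
    rewrite mulr_sumr -sumrB; apply: eq_bigr => j _; ring.
  apply: ler_sum => i _; apply: ler_sum => j _.
  have di := dotr_ge0 u i; have dj := dotr_ge0 u j.
  have xi : t ^+ 2 * dotr u u i i <= t * al.
    have : t ^+ 2 <= t by rewrite expr2; nra.
    have := ai i; have := sqr_ge0 t; nra.
  have xj : t ^+ 2 * dotr u u j j <= t * al.
    have : t ^+ 2 <= t by rewrite expr2; nra.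
    have := ai j; have := sqr_ge0 t; nra.
  have xi0 : 0 <= t ^+ 2 * dotr u u i i by apply: mulr_ge0 => //; apply: sqr_ge0.
  have xj0 : 0 <= t ^+ 2 * dotr u u j j by apply: mulr_ge0 => //; apply: sqr_ge0.
  move: xi xj xi0 xj0; set x1 := t ^+ 2 * dotr u u i i; set x2 := t ^+ 2 * dotr u u j j.
  move=> xi xj xi0 xj0.
  rewrite [X in _ <= X]mulrA.
  have d1 : 1 <= (1 + x1) * (1 + x2) by nra.
  apply: le_trans _ (@div_lb _ (B i j) _ d1).
  have : (1 + x1) * (1 + x2) - 1 <= 3 * (t * al) by nra.
  have := normr_ge0 (B i j); nra.
have h := le_trans HQ H0; rewrite subr_le0 in h.
by have := lt_le_trans tQ h; rewrite ltxx.
Qed.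

Lemma gram_bound {R : realType} {n : nat} {I : finType} (A : 'M[R]_n) (z : I -> 'I_n -> R) :
  (forall i, \sum_c z c i ^+ 2 = 1) ->
  `|\sum_i \sum_j A i j * \sum_c z c i * z c j| <= n%:R * opnorm2 A.
Proof.
move=> hz.
have e : \sum_i \sum_j A i j * \sum_c z c i * z c j = \sum_c qf A (z c).
  transitivity (\sum_i \sum_j \sum_c z c i * A i j * z c j).
    apply: eq_bigr => i _; apply: eq_bigr => j _; rewrite mulr_sumr.
    by apply: eq_bigr => c _; ring.
  rewrite /qf /bil [RHS]exchange_big /=; apply: eq_bigr => i _.
  by rewrite exchange_big.
rewrite e; apply: le_trans (ler_norm_sum _ _ _) _.
apply: le_trans (ler_sum _ (fun c _ => qf_bound A (z c))) _.
rewrite -mulr_sumr mulrC exchange_big /=.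
have -> : \sum_j \sum_i z i j ^+ 2 = \sum_(j < n) 1 by apply: eq_bigr => j _; exact: hz.
by rewrite sumr_const card_ord mulr_natl.
Qed.

Lemma proj_inner {R : realType} {n k : nat} (s : 'M[R]_(n, k)) i j a :
  \sum_l ((l == a)%:R - s i a * s i l) * ((l == a)%:R - s j a * s j l) =
  1 - s j a ^+ 2 - s i a ^+ 2 + s i a * s j a * dotr s s i j.
Proof.
transitivity (\sum_l ((l == a)%:R * (l == a)%:R + - ((l == a)%:R * (s j a * s j l))
   + - ((l == a)%:R * (s i a * s i l)) + s i a * s j a * (s i l * s j l))).
  by apply: eq_bigr => l _; ring.
rewrite !big_split /= !sumrN !sum_delta_l eqxx -mulr_sumr /dotr. rewrite /= !expr2; ring.
Qed.

Lemma proj_sum {R : realType} {n k : nat} (s : 'M[R]_(n, k)) i j :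
  onSnk s ->
  \sum_a \sum_l ((l == a)%:R - s i a * s i l) * ((l == a)%:R - s j a * s j l) =
  k%:R - 2 + dotr s s i j ^+ 2.
Proof.
move=> os.
under eq_bigr => a _ do rewrite proj_inner.
rewrite !big_split /= !sumrN sumr_const card_ord (os i) (os j).
rewrite -big_distrl /=.
have -> : \sum_a s i a * s j a = dotr s s i j by [].
ring.
Qed.

Lemma sum4 {R : realType} {I J K L : finType} (F : I -> J -> K -> L -> R) :
  \sum_a \sum_b \sum_i \sum_j F a b i j = \sum_i \sum_j \sum_a \sum_b F a b i j.
Proof.
transitivity (\sum_a \sum_i \sum_j \sum_b F a b i j).
  apply: eq_bigr => a _; rewrite exchange_big /=; apply: eq_bigr => i _.
  by rewrite exchange_big.
rewrite exchange_big /=; apply: eq_bigr => i _; by rewrite exchange_big.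
Qed.

Lemma sum_prod2 {R : realType} {I J : finType} (f : I -> R) (g : J -> R) c :
  \sum_a \sum_b c * g b * f a = c * (\sum_b g b) * (\sum_a f a).
Proof.
rewrite mulr_sumr; apply: eq_bigr => a _.
rewrite big_distrr big_distrl /=; apply: eq_bigr => b _; ring.
Qed.

Lemma lower_core {R : realType} {n k : nat} (A : 'M[R]_n) (s : 'M[R]_(n, k)) (X : 'M[R]_n) :
  A^T = A -> local_max_Snk A s -> psd X -> (forall i, X i i = 1) ->
  (k%:R - 2) * (\sum_i \sum_j A i j * X i j)
   + \sum_i \sum_j A i j * (X i j * dotr s s i j ^+ 2) <= (k%:R - 1) * FA A s.
Proof.
move=> sA lm pX dX; have os := lm.1.
have [m [Y hY]] := psd_fact X pX.
pose P a i j := \sum_l ((l == a)%:R - s i a * s i l) * ((l == a)%:R - s j a * s j l).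
pose u (a : 'I_k) (b : 'I_m) : 'M[R]_(n, k) :=
  \matrix_(i, l) (Y i b * ((l == a)%:R - s i a * s i l)).
have du a b i j : dotr (u a b) (u a b) i j = Y i b * Y j b * P a i j.
  rewrite /dotr /P mulr_sumr; apply: eq_bigr => l _; rewrite !mxE; ring.
have tg a b i : dotr s (u a b) i i = 0.
  rewrite /dotr.
  transitivity (Y i b * (\sum_l (l == a)%:R * s i l) - Y i b * s i a * \sum_l s i l ^+ 2).
    rewrite mulr_sumr mulr_sumr -sumrB; apply: eq_bigr => l _; rewrite !mxE; ring.
  by rewrite sum_delta_l (os i); ring.
have SO a b := second_order A s (u a b) sA lm (tg a b).
have hsum := ler_sum (index_enum _) (fun (a : 'I_k) (_ : true) => ler_sum (index_enum _) (fun (b : 'I_m) (_ : true) => SO a b)).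
have lam i : \sum_j A i j * dotr s s i j = \sum_j A i j * dotr s s i j by [].
have Mii i : dotr s s i i = 1 by rewrite -(os i); apply: eq_bigr => l _; rewrite expr2.
have e1 : \sum_a \sum_b \sum_i \sum_j A i j * dotr (u a b) (u a b) i j
   = \sum_i \sum_j A i j * X i j * (k%:R - 2 + dotr s s i j ^+ 2).
  rewrite sum4; apply: eq_bigr => i _; apply: eq_bigr => j _.
  rewrite -(proj_sum s i j os) hY.
  rewrite -(sum_prod2 (fun a => P a i j) (fun b => Y i b * Y j b)).
  apply: eq_bigr => a _; apply: eq_bigr => b _; rewrite du; ring.
have e2 : \sum_a \sum_b \sum_i (\sum_j A i j * dotr s s i j) * dotr (u a b) (u a b) i i
   = (k%:R - 1) * FA A s.
  transitivity (\sum_i \sum_a \sum_b (\sum_j A i j * dotr s s i j) * dotr (u a b) (u a b) i i).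
    transitivity (\sum_a \sum_i \sum_b (\sum_j A i j * dotr s s i j) * dotr (u a b) (u a b) i i).
      by apply: eq_bigr => a _; rewrite exchange_big.
    by rewrite exchange_big.
  rewrite /FA mulr_sumr; apply: eq_bigr => i _.
  have -> : (k%:R - 1) * (\sum_j A i j * dotr s s i j) = (\sum_j A i j * dotr s s i j)
      * (\sum_b Y i b * Y i b) * (\sum_a P a i i).
    by rewrite -hY dX /P (proj_sum s i i os) Mii; ring.
  rewrite -(sum_prod2 (fun a => P a i i) (fun b => Y i b * Y i b)).
  apply: eq_bigr => a _; apply: eq_bigr => b _; rewrite du; ring.
rewrite e1 e2 in hsum.
apply: le_trans hsum; rewrite le_eqVlt; apply/orP; left; apply/eqP.
rewrite mulr_sumr -big_split /=; apply: eq_bigr => i _.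
rewrite mulr_sumr -big_split /=; apply: eq_bigr => j _; ring.
Qed.

Lemma mxdotE {R : realType} {n : nat} (A X : 'M[R]_n) :
  mxdot A X = \sum_i \sum_j A i j * X i j.
Proof.
rewrite /mxdot /mxtrace exchange_big /=; apply: eq_bigr => i _; rewrite !mxE.
by apply: eq_bigr => j _; rewrite !mxE.
Qed.

Lemma sum_triple {R : realType} {I J K : finType} (f : I -> R) (g : J -> R) (h : K -> R) :
  \sum_(c : I * J * K) f c.1.1 * g c.1.2 * h c.2 = (\sum_a f a) * (\sum_b g b) * (\sum_c h c).
Proof.
rewrite -(pair_bigA _ (fun p c => f p.1 * g p.2 * h c)) /=.
rewrite -(pair_bigA _ (fun a b => \sum_c f a * g b * h c)) /=.
rewrite -mulrA big_distrl /=; apply: eq_bigr => a _.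
rewrite big_distrl mulr_sumr /=; apply: eq_bigr => b _.
rewrite mulrA mulr_sumr /=; apply: eq_bigr => c _; ring.
Qed.

Lemma feasible_bound {R : realType} {n k : nat} (A : 'M[R]_n) (s : 'M[R]_(n, k)) (X : 'M[R]_n) :
  onSnk s -> psd X -> (forall i, X i i = 1) ->
  `|\sum_i \sum_j A i j * X i j| <= n%:R * opnorm2 A /\
  `|\sum_i \sum_j A i j * (X i j * dotr s s i j ^+ 2)| <= n%:R * opnorm2 A.
Proof.
move=> os pX dX.
have [m [Y hY]] := psd_fact X pX.
have Mii i : dotr s s i i = 1 by rewrite -(os i); apply: eq_bigr => l _; rewrite expr2.
split.
  have := @gram_bound R n _ A (fun b i => Y i b) _.
  have -> : \sum_i \sum_j A i j * X i j = \sum_i \sum_j A i j * \sum_c Y i c * Y j c.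
    by apply: eq_bigr => i _; apply: eq_bigr => j _; rewrite hY.
  apply => i; rewrite -(dX i) hY; apply: eq_bigr => b _; by rewrite expr2.
pose z (c : 'I_m * 'I_k * 'I_k) i := Y i c.1.1 * s i c.1.2 * s i c.2.
have ez i j : \sum_c z c i * z c j = X i j * dotr s s i j ^+ 2.
  rewrite hY expr2 mulrA /dotr.
  rewrite -(sum_triple (fun b => Y i b * Y j b) (fun l => s i l * s j l) (fun l => s i l * s j l)).
  apply: eq_bigr => c _; rewrite /z; ring.
have := @gram_bound R n _ A z _.
have -> : \sum_i \sum_j A i j * (X i j * dotr s s i j ^+ 2) = \sum_i \sum_j A i j * \sum_c z c i * z c j.
  by apply: eq_bigr => i _; apply: eq_bigr => j _; rewrite ez.
apply => i.
have -> : \sum_c z c i ^+ 2 = \sum_c z c i * z c i by apply: eq_bigr => c _; rewrite expr2.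
by rewrite ez dX Mii expr1n mulr1.
Qed.

Theorem theorem1 (R : realType) (n k : nat) (A : 'M[R]_n) (s : 'M[R]_(n, k)) :
  (1 <= n)%N -> (2 <= k)%N -> A^T = A -> local_max_Snk A s ->
  FA A s <= SDP A /\
  SDP A - 8 / Num.sqrt (k%:R) * n%:R * opnorm2 A <= FA A s.
Proof.
move=> n1 k2 sA lm; have os := lm.1.
set N := opnorm2 A.
have N0 : 0 <= N := opnorm_ge0 A n1.
set T := n%:R * N.
have T0 : 0 <= T by apply: mulr_ge0.
set K : R := k%:R.
have K2 : 2 <= K by rewrite /K (ler_nat R 2 k).
set r := Num.sqrt K.
have r0 : 0 < r by rewrite sqrtr_gt0; lra.
have rr : r ^+ 2 = K by rewrite sqr_sqrtr //; lra.
set c := 8 / r.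
have cr : c * r = 8 by rewrite /c divfK // gt_eqF.
have X0p : psd (s *m s^T).
  split; first by rewrite trmx_mul trmxK.
  move=> v; rewrite qf_mx /qf /bil.
  have -> : \sum_a \sum_b v a 0 * (s *m s^T) a b * v b 0 =
            \sum_l (\sum_a v a 0 * s a l) ^+ 2.
    transitivity (\sum_a \sum_b \sum_l v a 0 * s a l * (v b 0 * s b l)).
      apply: eq_bigr => a _; apply: eq_bigr => b _; rewrite !mxE big_distrr big_distrl /=.
      by apply: eq_bigr => l _; rewrite mxE; ring.
    rewrite exchange_big /=.
    under eq_bigr => b _ do rewrite exchange_big /=.
    rewrite exchange_big /=; apply: eq_bigr => l _.
    rewrite expr2 big_distrl /=; apply: eq_bigr => a _; rewrite big_distrr /=.
    by apply: eq_bigr => b _; rewrite mulrC.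
  by apply: sumr_ge0 => l _; apply: sqr_ge0.
have X0d i : (s *m s^T) i i = 1.
  by rewrite mxE -(os i); apply: eq_bigr => l _; rewrite mxE expr2.
have X0F : mxdot A (s *m s^T) = FA A s.
  rewrite mxdotE /FA; apply: eq_bigr => i _; apply: eq_bigr => j _; rewrite mxE.
  by congr (_ * _); apply: eq_bigr => l _; rewrite mxE.
have main X : psd X -> (forall i, X i i = 1) -> mxdot A X - c * T <= FA A s.
  move=> pX dX.
  have core := lower_core A s X sA lm pX dX.
  have [b1 b2] := feasible_bound A s X os pX dX.
  rewrite mxdotE -/K in core *.
  move: core b1 b2.
  set P := \sum_i \sum_j A i j * X i j.
  set W := \sum_i \sum_j A i j * (X i j * dotr s s i j ^+ 2).
  set F := FA A s.
  move=> core b1 b2.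
  move: b1 b2; rewrite !ler_norml => /andP [b1 b1'] /andP [b2 b2'].
  rewrite -/N -/T in b1 b1' b2 b2'.
  have h1 : - 2 * T <= (K - 1) * (F - P) by nra.
  have h2 : 2 <= c * (K - 1).
    have : r <= (K + 1) / 2 by rewrite ler_pdivlMr //; nra.
    nra.
  have h3 : 0 <= (K - 1) * (F - P + c * T) by nra.
  rewrite pmulr_rge0 in h3; last by lra.
  lra.
have ne : ([set r | exists X : 'M[R]_n, psd X /\ (forall i, X i i = 1) /\ r = mxdot A X] !=set0)%classic.
  by exists (FA A s), (s *m s^T).
split.
  apply: ub_le_sup.
    exists T => x [X [pX [dX ->]]].
    have [b1 _] := feasible_bound A s X os pX dX.
    by rewrite mxdotE; apply: le_trans (ler_norm _) b1.
  by exists (s *m s^T); rewrite X0F.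
have : SDP A <= FA A s + c * T.
  apply: ge_sup => // x [X [pX [dX ->]]].
  have := main X pX dX; lra.
rewrite /T -/c mulrA; lra.
Qed.
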